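(* There exist a sequence $\{a_n\}_{n\in\mathbb Z}\in\ell^1(\mathbb Z)$ with $a_n>0$ for all $n$, and an infinite sequence $\{n_k\}_{k\ge1}\subset\mathbb N$ with $n_{k+1}>2n_k$ for all $k\ge1$, such that the entire functions $$h(z)=\sin\pi z\sum_{n\in\mathbb Z}\frac{a_n}{z-n},\qquad S(z)=\sin\pi z\sum_{n\in\mathbb Z}\frac{a_n^2}{z-n}$$ both vanish at the points $s_k=n_k+\tfrac12$, $k\in\mathbb N$, and $a_{n_k}=\alpha_kk^{-2}$ with $\alpha_k\in(1,3)$ for all $k\in\mathbb N$. *)

(* Defs.v *)
From Stdlib Require Import Reals ZArith Lra.
Open Scope R_scope.

(* Two-sided series over Z: sum_{n in Z} f n = l, enumerating Z as
   0, -1, 1, -2, 2, ... i.e. pairing f n with f (-n-1), n : nat. *)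
Definition Zseries (f : Z -> R) (l : R) : Prop :=
  infinite_sum (fun n : nat => f (Z.of_nat n) + f (- Z.of_nat n - 1)%Z) l.

Definition ell1 (a : Z -> R) : Prop :=
  exists l : R, Zseries (fun n => Rabs (a n)) l.

Definition sin_series_value (c : Z -> R) (z v : R) : Prop :=
  exists l : R, Zseries (fun n => c n / (z - IZR n)) l /\ v = sin (PI * z) * l.

(* Main.v *)
Require Import Defs.
From Stdlib Require Import Reals ZArith.
Open Scope R_scope.
From Stdlib Require Import Reals Lra Lia ClassicalEpsilon.
Open Scope R_scope.

Lemma ser_maj_ex (u M : nat -> R) (L : R) :
  (forall n, Rabs (u n) <= M n) -> infinite_sum M L -> exists l, infinite_sum u l.
Proof.
  intros H HM.
  assert (Habs : {l | Un_cv (fun N => sum_f_R0 (fun i => Rabs (u i)) N) l}).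
  { apply (Rseries_CV_comp _ M). intro n; split; [apply Rabs_pos|apply H].
    exists L; exact HM. }
  destruct (cv_cauchy_2 u) as [l Hl].
  { apply cauchy_abs. apply cv_cauchy_1. exact Habs. }
  exists l; exact Hl.
Qed.

Lemma ser_maj_bound (u M : nat -> R) (l L : R) :
  (forall n, Rabs (u n) <= M n) -> infinite_sum u l -> infinite_sum M L -> Rabs l <= L.
Proof.
  intros H Hu HM.
  apply (sum_cv_maj M (fun n _ => u n) 0 l L); auto.
Qed.

Lemma ser_plus (u v : nat -> R) l m :
  infinite_sum u l -> infinite_sum v m -> infinite_sum (fun n => u n + v n) (l + m).
Proof.
  intros Hu Hv. unfold infinite_sum in *.
  intros eps He. destruct (Hu (eps/2)) as [N1 H1]; [lra|].
  destruct (Hv (eps/2)) as [N2 H2]; [lra|].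
  exists (N1+N2)%nat. intros n Hn. rewrite plus_sum.
  specialize (H1 n ltac:(lia)). specialize (H2 n ltac:(lia)).
  unfold Rdist in *. 
  replace (sum_f_R0 u n + sum_f_R0 v n - (l + m)) with
    ((sum_f_R0 u n - l) + (sum_f_R0 v n - m)) by ring.
  eapply Rle_lt_trans; [apply Rabs_triang|lra].
Qed.

Lemma ser_scal (u : nat -> R) l c :
  infinite_sum u l -> infinite_sum (fun n => c * u n) (c * l).
Proof.
  intros Hu. unfold infinite_sum in *. intros eps He.
  destruct (Hu (eps / (Rabs c + 1))) as [N H1].
  { apply Rdiv_lt_0_compat; [lra|]. pose proof (Rabs_pos c); lra. }
  exists N. intros n Hn. specialize (H1 n Hn). unfold Rdist in *.
  assert (E : sum_f_R0 (fun n => c * u n) n - c * l = c * (sum_f_R0 u n - l)).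
  { rewrite Rmult_minus_distr_l. f_equal. clear.
    induction n; simpl; [ring| rewrite IHn; ring]. }
  rewrite E, Rabs_mult.
  pose proof (Rabs_pos c). pose proof (Rabs_pos (sum_f_R0 u n - l)).
  apply Rle_lt_trans with ((Rabs c + 1) * Rabs (sum_f_R0 u n - l)).
  { apply Rmult_le_compat_r; lra. }
  apply Rlt_le_trans with ((Rabs c + 1) * (eps / (Rabs c + 1))).
  { apply Rmult_lt_compat_l; lra. }
  right. field. lra.
Qed.

Lemma ser_ext (u v : nat -> R) l :
  (forall n, u n = v n) -> infinite_sum u l -> infinite_sum v l.
Proof.
  intros E Hu eps He. destruct (Hu eps He) as [N H]. exists N. intros n Hn.
  rewrite <- (sum_eq u v n); auto.
Qed.

Lemma ser_minus (u v : nat -> R) l m :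
  infinite_sum u l -> infinite_sum v m -> infinite_sum (fun n => u n - v n) (l - m).
Proof.
  intros Hu Hv. apply (ser_scal _ _ (-1)) in Hv.
  pose proof (ser_plus _ _ _ _ Hu Hv) as H.
  replace (l - m) with (l + -1 * m) by ring.
  eapply ser_ext; [|exact H]. intros; simpl; ring.
Qed.

Lemma ser_point (u : nat -> R) l j0 c :
  infinite_sum u l ->
  infinite_sum (fun n => if Nat.eqb n j0 then u n + c else u n) (l + c).
Proof.
  intros Hu eps He. destruct (Hu eps He) as [N H]. exists (N + j0)%nat.
  intros n Hn. specialize (H n ltac:(lia)). unfold Rdist in *.
  assert (E : sum_f_R0 (fun n => if Nat.eqb n j0 then u n + c else u n) n
              = sum_f_R0 u n + c).
  { assert (G : forall m, sum_f_R0 (fun n => if Nat.eqb n j0 then u n + c else u n) m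
               = sum_f_R0 u m + (if Nat.leb j0 m then c else 0)).
    { induction m as [|m IH].
      - simpl. destruct j0; simpl; ring.
      - rewrite !tech5. rewrite IH. destruct (Nat.eqb (S m) j0) eqn:E1.
        + apply Nat.eqb_eq in E1. subst.
          assert (Nat.leb (S m) m = false) as -> by (apply Nat.leb_gt; lia).
          assert (Nat.leb (S m) (S m) = true) as -> by (apply Nat.leb_le; lia). cbv beta iota; ring.
        + apply Nat.eqb_neq in E1.
          destruct (Nat.leb j0 m) eqn:E2.
          * apply Nat.leb_le in E2. assert (Nat.leb j0 (S m) = true) as -> by (apply Nat.leb_le; lia). cbv beta iota; ring.
          * apply Nat.leb_gt in E2. assert (Nat.leb j0 (S m) = false) as -> by (apply Nat.leb_gt; lia). cbv beta iota; ring. }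
    rewrite G. assert (Nat.leb j0 n = true) as -> by (apply Nat.leb_le; lia). ring. }
  rewrite E. replace (sum_f_R0 u n + c - (l + c)) with (sum_f_R0 u n - l) by ring. exact H.
Qed.

Definition ser (u : nat -> R) : R :=
  match excluded_middle_informative (exists l, infinite_sum u l) with
  | left H => proj1_sig (constructive_indefinite_description _ H)
  | right _ => 0
  end.

Lemma ser_spec (u : nat -> R) : (exists l, infinite_sum u l) -> infinite_sum u (ser u).
Proof.
  intro H. unfold ser. destruct (excluded_middle_informative _) as [H'|H'].
  - exact (proj2_sig (constructive_indefinite_description _ H')).
  - contradiction.
Qed.

Lemma ser_eq (u : nat -> R) l : infinite_sum u l -> ser u = l.
Proof.
  intro H. apply (uniqueness_sum u); auto. apply ser_spec; eauto.
Qed.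

(* sum of 1/(j+1)^2 bounded *)
Lemma tele_sum n : sum_f_R0 (fun j => / ((INR j + 1) * (INR j + 2))) n = 1 - / (INR n + 2).
Proof.
  induction n as [|n IH].
  - simpl. field.
  - rewrite tech5, IH, S_INR. pose proof (pos_INR n). field. lra.
Qed.

Lemma tele_cv : infinite_sum (fun j => / ((INR j + 1) * (INR j + 2))) 1.
Proof.
  intros eps He. destruct (archimed (/ eps)) as [H1 _].
  assert (Hup : (0 <= up (/eps))%Z).
  { apply le_IZR. pose proof (Rinv_0_lt_compat eps He). lra. }
  exists (Z.to_nat (up (/ eps))). intros n Hn. rewrite tele_sum. unfold Rdist.
  replace (1 - / (INR n + 2) - 1) with (- / (INR n + 2)) by ring.
  pose proof (pos_INR n).
  rewrite Rabs_Ropp, Rabs_right by (apply Rle_ge, Rlt_le, Rinv_0_lt_compat; lra).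
  assert (INR n >= IZR (up (/ eps))).
  { rewrite INR_IZR_INZ. apply Rle_ge, IZR_le. lia. }
  apply Rlt_le_trans with (/ (/ eps)).
  - apply Rinv_lt_contravar. apply Rmult_lt_0_compat; [apply Rinv_0_lt_compat; lra| lra]. lra.
  - rewrite Rinv_inv. lra.
Qed.

From Stdlib Require Import Reals Lra Lia.
Open Scope R_scope.

Lemma ser_terms_0 (u : nat -> R) l : infinite_sum u l ->
  forall eps, eps > 0 -> exists N, forall n, (n >= N)%nat -> Rabs (u n) < eps.
Proof.
  intros H eps He. destruct (H (eps/2)) as [N HN]; [lra|].
  exists (S N). intros n Hn. destruct n as [|n]; [lia|].
  pose proof (HN n ltac:(lia)) as H1. pose proof (HN (S n) ltac:(lia)) as H2.
  unfold Rdist in *. rewrite tech5 in H2.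
  replace (u (S n)) with ((sum_f_R0 u n + u (S n) - l) - (sum_f_R0 u n - l)) by ring.
  eapply Rle_lt_trans; [apply Rabs_triang|]. rewrite Rabs_Ropp. lra.
Qed.

Section Sparse.
Variable h : nat -> R.
Variable Nb : nat -> nat.
Hypothesis Nb0 : (1 <= Nb 0)%nat.
Hypothesis Nbgap : forall j, (Nb j + 4 <= Nb (S j))%nat.
Hypothesis hzero : forall n, (forall j d, (d <= 3)%nat -> n <> (Nb j + d)%nat) -> h n = 0.

Let B j := h (Nb j) + h (Nb j + 1)%nat + h (Nb j + 2)%nat + h (Nb j + 3)%nat.
Let A j := Rabs (h (Nb j)) + Rabs (h (Nb j + 1)%nat) + Rabs (h (Nb j + 2)%nat) + Rabs (h (Nb j + 3)%nat).
Let P n := sum_f_R0 h n.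

Lemma Nb_mono : forall i j, (i < j)%nat -> (Nb i + 4 <= Nb j)%nat.
Proof.
  intros i j; induction j as [|j IH]; intros Hij; [lia|].
  pose proof (Nbgap j). destruct (Nat.eq_dec i j) as [->|Hne]; [lia|].
  specialize (IH ltac:(lia)). lia.
Qed.

Lemma Nb_le : forall j, (Nb 0 <= Nb j)%nat.
Proof. intros [|j]; [lia|]. pose proof (Nb_mono 0 (S j) ltac:(lia)); lia. Qed.

Lemma between : forall a b, (a <= b)%nat -> (forall m, (a < m <= b)%nat -> h m = 0) -> P b = P a.
Proof.
  intros a b Hab Hz. induction b as [|b IH].
  - assert (a = 0%nat) by lia. subst; reflexivity.
  - destruct (Nat.eq_dec a (S b)) as [->|Hne]; [reflexivity|].
    unfold P in *. rewrite tech5. rewrite IH; [|lia|intros; apply Hz; lia].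
    rewrite (Hz (S b)) by lia. ring.
Qed.

Lemma P_before : forall n, (n < Nb 0)%nat -> P n = 0.
Proof.
  assert (Hz : forall m, (m < Nb 0)%nat -> h m = 0).
  { intros m Hm. apply hzero. intros j d _ E. pose proof (Nb_le j). lia. }
  intros n; induction n as [|n IH]; intros Hn; unfold P in *.
  - simpl. apply Hz; lia.
  - rewrite tech5, IH by lia. rewrite Hz by lia. ring.
Qed.

Lemma P_four : forall m, P (m + 4)%nat = P m + h (m+1)%nat + h (m+2)%nat + h (m+3)%nat + h (m+4)%nat.
Proof.
  intros m. unfold P. replace (m+4)%nat with (S (S (S (S m)))) by lia. rewrite !tech5.
  replace (S m) with (m+1)%nat by lia. replace (S (m+1)) with (m+2)%nat by lia.
  replace (S (m+2)) with (m+3)%nat by lia. replace (S (m+3)) with (m+4)%nat by lia. ring.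
Qed.

Lemma P_blk : forall J, P (Nb J + 3)%nat = P (Nb J - 1)%nat + B J.
Proof.
  intros J. pose proof (Nb_le J).
  replace (Nb J + 3)%nat with ((Nb J - 1) + 4)%nat by lia. rewrite P_four. unfold B.
  replace (Nb J - 1 + 1)%nat with (Nb J) by lia.
  replace (Nb J - 1 + 2)%nat with (Nb J + 1)%nat by lia.
  replace (Nb J - 1 + 3)%nat with (Nb J + 2)%nat by lia.
  replace (Nb J - 1 + 4)%nat with (Nb J + 3)%nat by lia. ring.
Qed.

Lemma gap_zero : forall J m, (Nb J + 3 < m)%nat -> (m < Nb (S J))%nat -> h m = 0.
Proof.
  intros J m H1 H2. apply hzero. intros j d Hd E.
  destruct (Nat.lt_trichotomy j J) as [Hl|[->|Hg]].
  - pose proof (Nb_mono j J Hl). lia.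
  - lia.
  - assert (Nb (S J) <= Nb j)%nat by (destruct (Nat.eq_dec j (S J)) as [->|]; [lia| pose proof (Nb_mono (S J) j ltac:(lia)); lia]).
    lia.
Qed.

Lemma P_end : forall J, P (Nb J + 3)%nat = sum_f_R0 B J.
Proof.
  induction J as [|J IH].
  - rewrite P_blk, P_before by lia. simpl. ring.
  - rewrite P_blk, tech5. f_equal.
    pose proof (Nbgap J).
    rewrite (between (Nb J + 3) (Nb (S J) - 1)); [exact IH|lia|].
    intros m Hm. apply (gap_zero J m); lia.
Qed.

Lemma exists_block : forall n, (Nb 0 <= n)%nat -> exists J, (Nb J <= n < Nb (S J))%nat.
Proof.
  induction n as [|n IH]; intros Hn.
  - lia.
  - destruct (Nat.eq_dec (Nb 0) (S n)) as [E|Hne].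
    + exists 0%nat. pose proof (Nbgap 0). lia.
    + destruct (IH ltac:(lia)) as [J HJ].
      destruct (Nat.eq_dec (S n) (Nb (S J))) as [E|Hne2].
      * exists (S J). pose proof (Nbgap (S J)). lia.
      * exists J. lia.
Qed.

Lemma A_pos J : 0 <= A J.
Proof. unfold A. pose proof (Rabs_pos (h (Nb J))). pose proof (Rabs_pos (h (Nb J+1)%nat)).
  pose proof (Rabs_pos (h (Nb J+2)%nat)). pose proof (Rabs_pos (h (Nb J+3)%nat)). lra. Qed.

Lemma P_bound : forall n J, (Nb J <= n < Nb (S J))%nat -> Rabs (P n - sum_f_R0 B J) <= 2 * A J.
Proof.
  intros n J [H1 H2]. pose proof (A_pos J).
  destruct (Compare_dec.le_lt_dec (Nb J + 3) n) as [Hle|Hlt].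
  - rewrite (between (Nb J + 3) n Hle). rewrite P_end. rewrite Rminus_diag, Rabs_R0. lra.
    intros m Hm. apply (gap_zero J m); lia.
  - assert (Hb : P (Nb J - 1)%nat + B J = sum_f_R0 B J) by (rewrite <- P_blk; apply P_end).
    rewrite <- Hb. pose proof (Nb_le J).
    assert (Hpart : Rabs (P n - P (Nb J - 1)%nat) <= A J).
    { unfold A. pose proof (Rabs_pos (h (Nb J))). pose proof (Rabs_pos (h (Nb J+1)%nat)).
      pose proof (Rabs_pos (h (Nb J+2)%nat)). pose proof (Rabs_pos (h (Nb J+3)%nat)).
      assert (n = Nb J \/ n = Nb J + 1 \/ n = Nb J + 2)%nat as [E|[E|E]] by lia; subst n; unfold P.
      - replace (Nb J) with (S (Nb J - 1)) at 1 by lia. rewrite tech5.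
        replace (S (Nb J - 1)) with (Nb J) by lia.
        replace (sum_f_R0 h (Nb J - 1) + h (Nb J) - sum_f_R0 h (Nb J - 1)) with (h (Nb J)) by ring. lra.
      - replace (Nb J + 1)%nat with (S (S (Nb J - 1))) at 1 by lia. rewrite !tech5.
        replace (S (Nb J - 1)) with (Nb J) by lia. replace (S (Nb J)) with (Nb J + 1)%nat by lia.
        replace (sum_f_R0 h (Nb J - 1) + h (Nb J) + h (Nb J + 1)%nat - sum_f_R0 h (Nb J - 1))
          with (h (Nb J) + h (Nb J + 1)%nat) by ring.
        eapply Rle_trans; [apply Rabs_triang|lra].
      - replace (Nb J + 2)%nat with (S (S (S (Nb J - 1)))) at 1 by lia. rewrite !tech5.
        replace (S (Nb J - 1)) with (Nb J) by lia. replace (S (Nb J)) with (Nb J + 1)%nat by lia.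
        replace (S (Nb J + 1)) with (Nb J + 2)%nat by lia.
        replace (sum_f_R0 h (Nb J - 1) + h (Nb J) + h (Nb J + 1)%nat + h (Nb J + 2)%nat - sum_f_R0 h (Nb J - 1))
          with (h (Nb J) + h (Nb J + 1)%nat + h (Nb J + 2)%nat) by ring.
        eapply Rle_trans; [apply Rabs_triang|]. pose proof (Rabs_triang (h (Nb J)) (h (Nb J + 1)%nat)). lra. }
    assert (HB : Rabs (B J) <= A J).
    { unfold A, B. eapply Rle_trans; [apply Rabs_triang|].
      eapply Rplus_le_compat_r. eapply Rle_trans; [apply Rabs_triang|].
      eapply Rplus_le_compat_r. apply Rabs_triang. }
    replace (P n - (P (Nb J - 1)%nat + B J)) with ((P n - P (Nb J - 1)%nat) + - B J) by ring.
    eapply Rle_trans; [apply Rabs_triang|]. rewrite Rabs_Ropp. lra.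
Qed.

Lemma sparse_sum (L LA : R) :
  infinite_sum A LA -> infinite_sum B L -> infinite_sum h L.
Proof.
  intros HA HB eps He.
  destruct (ser_terms_0 A LA HA (eps/4)) as [N1 H1]; [lra|].
  destruct (HB (eps/2)) as [N2 H2]; [lra|].
  exists (Nb (N1 + N2)). intros n Hn.
  destruct (exists_block n) as [J HJ]. { pose proof (Nb_le (N1+N2)). lia. }
  assert (HJ2 : (J >= N1 + N2)%nat).
  { destruct (Compare_dec.le_lt_dec (N1+N2) J); [lia|]. 
    assert (Nb (S J) <= Nb (N1+N2))%nat.
    { destruct (Nat.eq_dec (S J) (N1+N2)) as [->|]; [lia|]. pose proof (Nb_mono (S J) (N1+N2) ltac:(lia)); lia. }
    lia. }
  pose proof (P_bound n J HJ). specialize (H1 J ltac:(lia)). specialize (H2 J ltac:(lia)).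
  rewrite Rabs_right in H1 by (apply Rle_ge, A_pos).
  unfold Rdist in *. fold (P n).
  replace (P n - L) with ((P n - sum_f_R0 B J) + (sum_f_R0 B J - L)) by ring.
  eapply Rle_lt_trans; [apply Rabs_triang|]. lra.
Qed.
End Sparse.
From Stdlib Require Import Reals Lra Lia ZArith.
Open Scope R_scope.

Definition NN (k : nat) : nat := (2 ^ (12 * k))%nat.
Definition Nb (j : nat) : nat := (NN (S j) - 1)%nat.

Definition dec (n : nat) : option (nat * nat) :=
  let L := Nat.log2 (S n) in
  if (Nat.eqb (L mod 12) 0 && Nat.ltb 0 L && Nat.leb (S n - 2 ^ L) 3)%bool
  then Some (L / 12, S n - 2 ^ L)%nat else None.

Lemma NN_S k : NN (S k) = (NN k * 4096)%nat.
Proof. unfold NN. replace (12 * S k)%nat with (12 * k + 12)%nat by lia.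
  rewrite Nat.pow_add_r. reflexivity. Qed.

Lemma NN_ge1 k : (1 <= NN k)%nat.
Proof. induction k; [unfold NN; simpl; lia|rewrite NN_S; lia]. Qed.

Lemma NN_ge k : (1 <= k)%nat -> (4096 <= NN k)%nat.
Proof. intros H. destruct k; [lia|]. rewrite NN_S. pose proof (NN_ge1 k). lia. Qed.

Lemma NN_lt i j : (i < j)%nat -> (NN i * 4096 <= NN j)%nat.
Proof.
  intros H. induction j as [|j IH]; [lia|]. rewrite NN_S.
  destruct (Nat.eq_dec i j) as [->|Hne]; [lia|]. specialize (IH ltac:(lia)). lia.
Qed.

Lemma dec_some n k d : dec n = Some (k, d) -> (1 <= k)%nat /\ (d <= 3)%nat /\ n = (Nb (k - 1) + d)%nat.
Proof.
  unfold dec. set (L := Nat.log2 (S n)).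
  destruct (Nat.eqb (L mod 12) 0 && Nat.ltb 0 L && Nat.leb (S n - 2 ^ L) 3)%bool eqn:E; [|discriminate].
  intros Heq. assert (k = L / 12 /\ d = S n - 2 ^ L)%nat as [-> ->] by (split; congruence).
  apply andb_prop in E as [E E3]. apply andb_prop in E as [E1 E2].
  apply Nat.eqb_eq in E1. apply Nat.ltb_lt in E2. apply Nat.leb_le in E3.
  pose proof (Nat.log2_spec (S n) ltac:(lia)) as [Hs1 Hs2]. fold L in Hs1, Hs2.
  assert (HL : L = (12 * (L / 12))%nat).
  { pose proof (Nat.div_mod L 12 ltac:(lia)). lia. }
  assert (Hk : (1 <= L / 12)%nat).
  { destruct (L / 12)%nat eqn:Q; [|lia]. lia. }
  split; [exact Hk|]. split; [exact E3|].
  assert (HNb : Nb (L / 12 - 1) = (2 ^ L - 1)%nat).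
  { unfold Nb. replace (S (L / 12 - 1)) with (L / 12)%nat by lia. unfold NN. rewrite <- HL. reflexivity. }
  rewrite HNb. pose proof (Nat.pow_nonzero 2 L). lia.
Qed.

Lemma dec_blk j d : (d <= 3)%nat -> dec (Nb j + d) = Some (S j, d).
Proof.
  intros Hd. unfold dec, Nb. pose proof (NN_ge (S j) ltac:(lia)) as HN.
  replace (S (NN (S j) - 1 + d)) with (NN (S j) + d)%nat by lia.
  assert (HL : Nat.log2 (NN (S j) + d) = (12 * S j)%nat).
  { apply Nat.log2_unique; [lia|]. unfold NN in *. rewrite Nat.pow_succ_r'. lia. }
  rewrite HL. unfold NN.
  replace (12 * S j)%nat with (S j * 12)%nat by lia.
  rewrite Nat.Div0.mod_mul, Nat.div_mul by lia.
  replace (2 ^ (S j * 12) + d - 2 ^ (S j * 12))%nat with d by lia.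
  assert (Nat.leb d 3 = true) as -> by (apply Nat.leb_le; lia).
  assert (Nat.ltb 0 (S j * 12) = true) as -> by (apply Nat.ltb_lt; lia).
  reflexivity.
Qed.

Lemma Nb_gap j : (Nb j + 4 <= Nb (S j))%nat.
Proof. unfold Nb. rewrite (NN_S (S j)). pose proof (NN_ge (S j) ltac:(lia)). lia. Qed.

Lemma Nb0_ge : (1 <= Nb 0)%nat.
Proof. unfold Nb. pose proof (NN_ge 1 ltac:(lia)). lia. Qed.

Lemma abs_le_b x y : Rabs x <= y -> - y <= x <= y.
Proof. unfold Rabs; destruct (Rcase_abs x); intros; lra. Qed.
Lemma abs_le_i x y : - y <= x <= y -> Rabs x <= y.
Proof. unfold Rabs; destruct (Rcase_abs x); intros; lra. Qed.

Lemma div_le (v x V X : R) : Rabs v <= V -> 0 < X -> X <= Rabs x -> Rabs (v / x) <= V / X.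
Proof.
  intros H1 H2 H3. unfold Rdiv. rewrite Rabs_mult, Rabs_inv.
  apply Rmult_le_compat; [apply Rabs_pos| left; apply Rinv_0_lt_compat; lra|exact H1|].
  apply Rinv_le_contravar; lra.
Qed.

Definition m1 k := 2 / (INR k) ^ 2.
Definition m2 k := 1 / (INR k) ^ 2.
Definition val (xi eta : nat -> R) (k d : nat) : R :=
  match d with
  | 0%nat => m2 k + eta k
  | 1%nat => m1 k + xi k
  | 2%nat => m1 k - xi k
  | _ => m2 k - eta k
  end.
Definition ebase (z : Z) : R := (/ 4) ^ (Z.abs_nat z).
Definition aseq (xi eta : nat -> R) (z : Z) : R :=
  if Z.ltb z 0 then ebase z else
  match dec (Z.to_nat z) with Some (k, d) => val xi eta k d | None => ebase z end.

Definition Box (xi eta : nat -> R) := forall k, (1 <= k)%nat ->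
  Rabs (xi k) <= / (2 * (INR k) ^ 2) /\ Rabs (eta k) <= / (2 * (INR k) ^ 2).

Lemma INR_k_pos k : (1 <= k)%nat -> 1 <= INR k.
Proof. intros. apply (le_INR 1 k) in H. simpl in H. exact H. Qed.

Lemma val_bounds xi eta k d : Box xi eta -> (1 <= k)%nat ->
  0 < val xi eta k d /\ val xi eta k d <= 3 / (INR k) ^ 2.
Proof.
  intros HB Hk. destruct (HB k Hk) as [H1 H2]. pose proof (INR_k_pos k Hk).
  assert (Hp : 0 < INR k ^ 2) by (apply pow_lt; lra).
  assert (E : / (2 * INR k ^ 2) = (1/2) / INR k ^ 2) by (field; lra).
  rewrite E in H1, H2. apply abs_le_b in H1. apply abs_le_b in H2.
  unfold val, m1, m2.
  assert (forall c, c / INR k ^ 2 = c * / INR k ^ 2) as Hc by (intros; unfold Rdiv; ring).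
  rewrite !Hc in *. pose proof (Rinv_0_lt_compat _ Hp).
  destruct d as [|[|[|d]]]; lra.
Qed.

Definition sk (k : nat) : R := INR (NN k) + / 2.
Definition pos (j d : nat) : R := INR (Nb j + d).

Lemma half_int a b : / 2 <= Rabs (INR a + / 2 - INR b).
Proof.
  destruct (Compare_dec.le_lt_dec b a) as [H|H].
  - replace (INR a + /2 - INR b) with (INR (a - b) + /2) by (rewrite minus_INR by lia; ring).
    pose proof (pos_INR (a - b)). rewrite Rabs_right by lra. lra.
  - assert (INR a + 1 <= INR b).
    { rewrite <- S_INR. apply le_INR. lia. }
    rewrite Rabs_left by lra. lra.
Qed.

Lemma pos_eq j d : pos j d = INR (NN (S j)) - 1 + INR d.
Proof. unfold pos, Nb. pose proof (NN_ge1 (S j)). rewrite plus_INR, minus_INR by lia. simpl. ring. Qed.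



Lemma NN_ge_R k : (1 <= k)%nat -> 4096 <= INR (NN k).
Proof. intros H. pose proof (le_INR _ _ (NN_ge k H)). 
  replace (INR 4096) with 4096 in H0 by (simpl; ring). exact H0. Qed.

Lemma NN_lt_R i j : (i < j)%nat -> INR (NN i) * 4096 <= INR (NN j).
Proof. intros H. pose proof (le_INR _ _ (NN_lt i j H)). rewrite mult_INR in H0.
  replace (INR 4096) with 4096 in H0 by (simpl; ring). exact H0. Qed.

Lemma far k j d : (1 <= k)%nat -> S j <> k -> (d <= 3)%nat -> INR (NN k) / 2 <= Rabs (sk k - pos j d).
Proof.
  intros Hk Hjk Hd. rewrite pos_eq. unfold sk.
  pose proof (NN_ge_R k Hk). pose proof (pos_INR d). pose proof (le_INR _ _ Hd) as Hd'.
  replace (INR 3) with 3 in Hd' by (simpl; ring).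
  pose proof (NN_ge1 (S j)) as H1. apply le_INR in H1. simpl in H1.
  destruct (Nat.lt_total (S j) k) as [Hlt|[Heq|Hgt]].
  - pose proof (NN_lt_R _ _ Hlt). rewrite Rabs_right; lra.
  - contradiction.
  - pose proof (NN_lt_R _ _ Hgt). rewrite Rabs_left; lra.
Qed.

Lemma near k j d : / 2 <= Rabs (sk k - pos j d).
Proof. unfold sk, pos. apply half_int. Qed.

Lemma local_dist k d : (1 <= k)%nat -> sk k - pos (k - 1) d = 3 / 2 - INR d.
Proof. intros Hk. rewrite pos_eq. replace (S (k - 1)) with k by lia. unfold sk. field. Qed.

Definition blk4 (f : nat -> R) : R := f 0%nat + f 1%nat + f 2%nat + f 3%nat.
Definition Fblk xi eta k j := blk4 (fun d => val xi eta (S j) d / (sk k - pos j d)).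
Definition Gblk xi eta k j := blk4 (fun d => (val xi eta (S j) d) ^ 2 / (sk k - pos j d)).

Lemma blk4_bound (f : nat -> R) (c : R) : (forall d, (d <= 3)%nat -> Rabs (f d) <= c) -> Rabs (blk4 f) <= 4 * c.
Proof.
  intros H. unfold blk4. pose proof (H 0%nat ltac:(lia)). pose proof (H 1%nat ltac:(lia)).
  pose proof (H 2%nat ltac:(lia)). pose proof (H 3%nat ltac:(lia)).
  eapply Rle_trans; [apply Rabs_triang|]. eapply Rle_trans; [apply Rplus_le_compat_r, Rabs_triang|].
  eapply Rle_trans; [apply Rplus_le_compat_r, Rplus_le_compat_r, Rabs_triang|]. lra.
Qed.

Definition isq (j : nat) : R := / (INR j + 1) ^ 2.

Lemma isq_pos j : 0 < isq j.
Proof. unfold isq. apply Rinv_0_lt_compat, pow_lt. pose proof (pos_INR j); lra. Qed.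

Lemma val_abs xi eta j d : Box xi eta -> Rabs (val xi eta (S j) d) <= 3 * isq j.
Proof.
  intros HB. destruct (val_bounds xi eta (S j) d HB ltac:(lia)) as [H1 H2].
  rewrite Rabs_right by lra. unfold isq. rewrite S_INR in H2. unfold Rdiv in H2. lra.
Qed.

Lemma isq_le1 j : isq j <= 1.
Proof. unfold isq. pose proof (pos_INR j). rewrite <- Rinv_1. apply Rinv_le_contravar; [lra|].
  replace 1 with (1 ^ 2) by ring. apply pow_incr. lra. Qed.

Lemma val_sq_abs xi eta j d : Box xi eta -> Rabs ((val xi eta (S j) d) ^ 2) <= 9 * isq j.
Proof.
  intros HB. pose proof (val_abs xi eta j d HB) as H. pose proof (isq_pos j). pose proof (isq_le1 j).
  rewrite <- RPow_abs. apply Rle_trans with ((3 * isq j) ^ 2).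
  - apply pow_incr. split; [apply Rabs_pos|exact H].
  - simpl. nra.
Qed.

Lemma Fblk_far xi eta k j : Box xi eta -> (1 <= k)%nat -> S j <> k ->
  Rabs (Fblk xi eta k j) <= (24 / INR (NN k)) * isq j.
Proof.
  intros HB Hk Hj. pose proof (NN_ge_R k Hk).
  replace ((24 / INR (NN k)) * isq j) with (4 * ((3 * isq j) / (INR (NN k) / 2))) by (field; lra).
  apply blk4_bound. intros d Hd. apply div_le; [apply val_abs; auto| lra| apply far; auto].
Qed.

Lemma Gblk_far xi eta k j : Box xi eta -> (1 <= k)%nat -> S j <> k ->
  Rabs (Gblk xi eta k j) <= (72 / INR (NN k)) * isq j.
Proof.
  intros HB Hk Hj. pose proof (NN_ge_R k Hk).
  replace ((72 / INR (NN k)) * isq j) with (4 * ((9 * isq j) / (INR (NN k) / 2))) by (field; lra).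
  apply blk4_bound. intros d Hd. apply div_le; [apply val_sq_abs; auto| lra| apply far; auto].
Qed.

Lemma Fblk_near xi eta k j : Box xi eta -> Rabs (Fblk xi eta k j) <= 24 * isq j.
Proof.
  intros HB. replace (24 * isq j) with (4 * ((3 * isq j) / (/2))) by field.
  apply blk4_bound. intros d Hd. apply div_le; [apply val_abs; auto| lra| apply near].
Qed.

Lemma Gblk_near xi eta k j : Box xi eta -> Rabs (Gblk xi eta k j) <= 72 * isq j.
Proof.
  intros HB. replace (72 * isq j) with (4 * ((9 * isq j) / (/2))) by field.
  apply blk4_bound. intros d Hd. apply div_le; [apply val_sq_abs; auto| lra| apply near].
Qed.

Definition Close (xi eta xi' eta' : nat -> R) (del : R) := forall k, (1 <= k)%nat ->
  Rabs (xi k - xi' k) <= del / (INR k) ^ 2 /\ Rabs (eta k - eta' k) <= del / (INR k) ^ 2.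

Lemma val_diff xi eta xi' eta' del j d : Close xi eta xi' eta' del ->
  Rabs (val xi eta (S j) d - val xi' eta' (S j) d) <= del * isq j.
Proof.
  intros HC. destruct (HC (S j) ltac:(lia)) as [H1 H2].
  replace (del / INR (S j) ^ 2) with (del * isq j) in H1, H2 by (unfold isq; rewrite S_INR; field; pose proof (pos_INR j); lra).
  unfold val. destruct d as [|[|[|d]]].
  - replace (m2 (S j) + eta (S j) - (m2 (S j) + eta' (S j))) with (eta (S j) - eta' (S j)) by ring. exact H2.
  - replace (m1 (S j) + xi (S j) - (m1 (S j) + xi' (S j))) with (xi (S j) - xi' (S j)) by ring. exact H1.
  - replace (m1 (S j) - xi (S j) - (m1 (S j) - xi' (S j))) with (- (xi (S j) - xi' (S j))) by ring. rewrite Rabs_Ropp. exact H1.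
  - replace (m2 (S j) - eta (S j) - (m2 (S j) - eta' (S j))) with (- (eta (S j) - eta' (S j))) by ring. rewrite Rabs_Ropp. exact H2.
Qed.

Lemma blk4_minus f g : blk4 f - blk4 g = blk4 (fun d => f d - g d).
Proof. unfold blk4. ring. Qed.

Lemma Fblk_diff xi eta xi' eta' del k j : Close xi eta xi' eta' del -> (1 <= k)%nat -> S j <> k ->
  Rabs (Fblk xi eta k j - Fblk xi' eta' k j) <= (8 * del / INR (NN k)) * isq j.
Proof.
  intros HC Hk Hj. pose proof (NN_ge_R k Hk). unfold Fblk. rewrite blk4_minus.
  replace ((8 * del / INR (NN k)) * isq j) with (4 * ((del * isq j) / (INR (NN k) / 2))) by (field; lra).
  apply blk4_bound. intros d Hd.
  assert (pos_ne : sk k - pos j d <> 0).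
  { intro E. pose proof (far k j d Hk Hj Hd). rewrite E, Rabs_R0 in H0. lra. }
  replace (val xi eta (S j) d / (sk k - pos j d) - val xi' eta' (S j) d / (sk k - pos j d))
    with ((val xi eta (S j) d - val xi' eta' (S j) d) / (sk k - pos j d)) by (field; exact pos_ne).
  apply div_le; [apply val_diff; auto| lra| apply far; auto].
Qed.

Lemma Gblk_diff xi eta xi' eta' del k j : Box xi eta -> Box xi' eta' -> Close xi eta xi' eta' del -> (1 <= k)%nat -> S j <> k ->
  Rabs (Gblk xi eta k j - Gblk xi' eta' k j) <= (48 * del / INR (NN k)) * isq j.
Proof.
  intros HB HB' HC Hk Hj. pose proof (NN_ge_R k Hk). unfold Gblk. rewrite blk4_minus.
  replace ((48 * del / INR (NN k)) * isq j) with (4 * ((6 * del * isq j) / (INR (NN k) / 2))) by (field; lra).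
  apply blk4_bound. intros d Hd.
  assert (pos_ne : sk k - pos j d <> 0).
  { intro E. pose proof (far k j d Hk Hj Hd). rewrite E, Rabs_R0 in H0. lra. }
  set (v := val xi eta (S j) d). set (v' := val xi' eta' (S j) d).
  replace (v ^ 2 / (sk k - pos j d) - v' ^ 2 / (sk k - pos j d))
    with (((v - v') * (v + v')) / (sk k - pos j d)) by (field; exact pos_ne).
  apply div_le; [| lra| apply far; auto].
  pose proof (val_diff xi eta xi' eta' del j d HC) as H1. fold v v' in H1.
  pose proof (val_abs xi eta j d HB) as H2. pose proof (val_abs xi' eta' j d HB') as H3. fold v in H2. fold v' in H3.
  pose proof (isq_pos j). pose proof (isq_le1 j).
  rewrite Rabs_mult. 
  assert (Rabs (v + v') <= 6 * isq j) by (eapply Rle_trans; [apply Rabs_triang|lra]).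
  assert (0 <= del) by (pose proof (Rabs_pos (v - v')); nra).
  apply Rle_trans with ((del * isq j) * (6 * isq j)).
  - apply Rmult_le_compat; auto using Rabs_pos.
  - replace (del * isq j * (6 * isq j)) with ((6 * del * isq j) * isq j) by ring.
    rewrite <- (Rmult_1_r (6 * del * isq j)) at 2. apply Rmult_le_compat_l; [|lra].
    apply Rmult_le_pos; lra.
Qed.

Lemma isq_tele j : isq j <= 2 * / ((INR j + 1) * (INR j + 2)).
Proof.
  unfold isq. pose proof (pos_INR j).
  replace (2 * / ((INR j + 1) * (INR j + 2))) with (/ ((INR j + 1) * (INR j + 2) / 2)) by (field; lra).
  apply Rinv_le_contravar.
  - apply Rmult_lt_0_compat; [|lra]. apply Rmult_lt_0_compat; lra.
  - simpl. nra.
Qed.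

Lemma ser_isq (u : nat -> R) c : 0 <= c -> (forall j, Rabs (u j) <= c * isq j) ->
  exists l, infinite_sum u l /\ Rabs l <= 2 * c.
Proof.
  intros Hc H.
  assert (HM : infinite_sum (fun j => c * (2 * / ((INR j + 1) * (INR j + 2)))) (c * (2 * 1))).
  { apply ser_scal. apply ser_scal. exact tele_cv. }
  assert (Hm : forall j, Rabs (u j) <= c * (2 * / ((INR j + 1) * (INR j + 2)))).
  { intros j. eapply Rle_trans; [apply H|]. apply Rmult_le_compat_l; [exact Hc| apply isq_tele]. }
  destruct (ser_maj_ex u _ _ Hm HM) as [l Hl]. exists l. split; [exact Hl|].
  replace (2 * c) with (c * (2 * 1)) by ring. exact (ser_maj_bound u _ l _ Hm Hl HM).
Qed.

Lemma geo_cv : infinite_sum (fun n => (/ 2) ^ n) 2.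
Proof.
  assert (H : infinite_sum (fun n => 1 * (/2) ^ n) (/ (1 - / 2))).
  { apply (GP_infinite (/2)). rewrite Rabs_right; lra. }
  assert (E : / (1 - / 2) = 2) by field. rewrite E in H.
  apply (ser_ext (fun n => 1 * (/2) ^ n)); [intros n; ring|exact H].
Qed.

Lemma ser_geo (u : nat -> R) c : 0 <= c -> (forall n, Rabs (u n) <= c * (/ 2) ^ n) ->
  exists l, infinite_sum u l /\ Rabs l <= 2 * c.
Proof.
  intros Hc H. pose proof (ser_scal _ _ c geo_cv) as HM.
  destruct (ser_maj_ex u _ _ H HM) as [l Hl]. exists l. split; [exact Hl|].
  replace (2 * c) with (c * 2) by ring. exact (ser_maj_bound u _ l _ H Hl HM).
Qed.

Definition bp (Phi : Z -> R -> R) (n : nat) : R :=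
  (match dec n with Some _ => 0 | None => Phi (Z.of_nat n) (ebase (Z.of_nat n)) end)
  + Phi (- Z.of_nat n - 1)%Z (ebase (- Z.of_nat n - 1)%Z).
Definition spc (Phi : Z -> R -> R) xi eta (n : nat) : R :=
  match dec n with Some (k, d) => Phi (Z.of_nat n) (val xi eta k d) | None => 0 end.

Lemma pair_split Phi xi eta n :
  Phi (Z.of_nat n) (aseq xi eta (Z.of_nat n)) + Phi (- Z.of_nat n - 1)%Z (aseq xi eta (- Z.of_nat n - 1)%Z)
  = spc Phi xi eta n + bp Phi n.
Proof.
  unfold aseq, spc, bp.
  assert (Z.ltb (Z.of_nat n) 0 = false) as -> by (apply Z.ltb_ge; lia).
  assert (Z.ltb (- Z.of_nat n - 1) 0 = true) as -> by (apply Z.ltb_lt; lia).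
  rewrite Nat2Z.id. destruct (dec n) as [[k d]|]; ring.
Qed.

Lemma ebase_nat n : ebase (Z.of_nat n) = (/ 4) ^ n.
Proof. unfold ebase. f_equal. lia. Qed.
Lemma ebase_neg n : ebase (- Z.of_nat n - 1)%Z = (/ 4) ^ (S n).
Proof. unfold ebase. f_equal. lia. Qed.
Lemma IZR_neg n : IZR (- Z.of_nat n - 1)%Z = - INR n - 1.
Proof. rewrite minus_IZR, opp_IZR, <- INR_IZR_INZ. reflexivity. Qed.

Lemma q4_le n : 0 < (/ 4) ^ n <= (/ 2) ^ n.
Proof. split; [apply pow_lt; lra|]. apply pow_incr. lra. Qed.

Lemma q4_split n : (/ 4) ^ n = (/ 2) ^ n * (/ 2) ^ n.
Proof. rewrite <- Rpow_mult_distr. f_equal. field. Qed.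

Lemma base_pos_bound k n : (1 <= k)%nat ->
  Rabs ((/ 4) ^ n / (sk k - INR n)) <= (4 / INR (NN k)) * (/ 2) ^ n.
Proof.
  intros Hk. pose proof (NN_ge_R k Hk) as HX. set (X := INR (NN k)) in *.
  pose proof (q4_le n) as [Q1 Q2]. pose proof (pow_lt (/2) n ltac:(lra)) as Q3.
  destruct (Compare_dec.le_lt_dec (2 * n) (NN k)) as [Hs|Hs].
  - apply le_INR in Hs. rewrite mult_INR in Hs. simpl (INR 2) in Hs. fold X in Hs.
    apply Rle_trans with ((/ 4) ^ n / (X / 2)).
    + apply div_le; [rewrite Rabs_right; lra| lra|]. unfold sk. fold X. rewrite Rabs_right; lra.
    + replace ((/ 4) ^ n / (X / 2)) with ((/ 4) ^ n * (2 / X)) by (field; lra).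
      apply Rle_trans with ((/2)^n * (2 / X)).
      * apply Rmult_le_compat_r; [|lra]. apply Rlt_le, Rdiv_lt_0_compat; lra.
      * unfold Rdiv. assert (0 < / X) by (apply Rinv_0_lt_compat; lra). nra.
  - apply Rle_trans with ((/ 4) ^ n / (/ 2)).
    + apply div_le; [rewrite Rabs_right; lra| lra| unfold sk; apply half_int].
    + assert (HXn : X <= 2 * 2 ^ n).
      { pose proof (Nat.pow_gt_lin_r 2 n ltac:(lia)).
        assert (NN k <= 2 * 2 ^ n)%nat by lia. apply le_INR in H0.
        rewrite mult_INR, pow_INR in H0. simpl (INR 2) in H0. exact H0. }
      assert (Hp : (/ 2) ^ n <= 2 / X).
      { rewrite pow_inv. replace (2 / X) with (/ (X / 2)) by (field; lra).
        apply Rinv_le_contravar; lra. }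
      rewrite q4_split. unfold Rdiv at 1. replace (/ / 2) with 2 by field.
      unfold Rdiv in Hp |- *. assert (0 < / X) by (apply Rinv_0_lt_compat; lra). nra.
Qed.

Lemma base_neg_bound k n : (1 <= k)%nat ->
  Rabs ((/ 4) ^ (S n) / (sk k - (- INR n - 1))) <= (1 / INR (NN k)) * (/ 2) ^ n.
Proof.
  intros Hk. pose proof (NN_ge_R k Hk) as HX. pose proof (pos_INR n).
  pose proof (q4_le (S n)) as [Q1 Q2]. pose proof (pow_lt (/2) n ltac:(lra)) as Q3.
  apply Rle_trans with ((/ 2) ^ n / INR (NN k)).
  - apply div_le; [| lra|].
    + rewrite Rabs_right by lra. simpl in Q2 |- *. nra.
    + unfold sk. rewrite Rabs_right; lra.
  - unfold Rdiv. lra.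
Qed.

Definition PhiF (s : R) (z : Z) (v : R) : R := v / (s - IZR z).
Definition PhiG (s : R) (z : Z) (v : R) : R := v ^ 2 / (s - IZR z).
Definition PhiA (z : Z) (v : R) : R := Rabs v.

Lemma sq_div_le v x : 0 < v <= 1 -> Rabs (v ^ 2 / x) <= Rabs (v / x).
Proof.
  intros Hv. replace (v ^ 2 / x) with (v * (v / x)) by (unfold Rdiv; ring).
  rewrite Rabs_mult, Rabs_right by lra. pose proof (Rabs_pos (v / x)). nra.
Qed.

Lemma bpF_bound k n : (1 <= k)%nat -> Rabs (bp (PhiF (sk k)) n) <= (5 / INR (NN k)) * (/ 2) ^ n.
Proof.
  intros Hk. unfold bp, PhiF. rewrite ebase_nat, ebase_neg, IZR_neg, <- INR_IZR_INZ.
  pose proof (base_pos_bound k n Hk). pose proof (base_neg_bound k n Hk).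
  pose proof (pow_lt (/2) n ltac:(lra)). pose proof (NN_ge_R k Hk).
  assert (0 < / INR (NN k)) by (apply Rinv_0_lt_compat; lra).
  eapply Rle_trans; [apply Rabs_triang|].
  destruct (dec n); [rewrite Rabs_R0|]; unfold Rdiv in *; nra.
Qed.

Lemma bpG_bound k n : (1 <= k)%nat -> Rabs (bp (PhiG (sk k)) n) <= (5 / INR (NN k)) * (/ 2) ^ n.
Proof.
  intros Hk. unfold bp, PhiG. rewrite ebase_nat, ebase_neg, IZR_neg, <- INR_IZR_INZ.
  pose proof (base_pos_bound k n Hk). pose proof (base_neg_bound k n Hk).
  pose proof (sq_div_le ((/4)^n) (sk k - INR n)) as S1.
  pose proof (sq_div_le ((/4)^(S n)) (sk k - (- INR n - 1))) as S2.
  pose proof (q4_le n). pose proof (q4_le (S n)).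
  assert ((/4)^n <= 1) by (rewrite <- (pow1 n); apply pow_incr; lra). assert ((/4)^(S n) <= 1) by (rewrite <- (pow1 (S n)); apply pow_incr; lra).
  specialize (S1 ltac:(lra)). specialize (S2 ltac:(lra)).
  pose proof (pow_lt (/2) n ltac:(lra)). pose proof (NN_ge_R k Hk).
  assert (0 < / INR (NN k)) by (apply Rinv_0_lt_compat; lra).
  eapply Rle_trans; [apply Rabs_triang|].
  destruct (dec n); [rewrite Rabs_R0|]; unfold Rdiv in *; nra.
Qed.

Lemma bpA_bound n : Rabs (bp PhiA n) <= 2 * (/ 2) ^ n.
Proof.
  unfold bp, PhiA. rewrite ebase_nat, ebase_neg.
  pose proof (q4_le n). pose proof (q4_le (S n)).
  assert ((/2)^(S n) <= (/2)^n) by (simpl; pose proof (pow_lt (/2) n ltac:(lra)); nra).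
  eapply Rle_trans; [apply Rabs_triang|].
  rewrite (Rabs_right (Rabs ((/4)^(S n)))) by (apply Rle_ge, Rabs_pos).
  rewrite (Rabs_right ((/4)^(S n))) by lra.
  destruct (dec n); [rewrite Rabs_R0; lra|].
  rewrite Rabs_right by (apply Rle_ge, Rabs_pos). rewrite Rabs_right by lra. lra.
Qed.

Definition EF k := ser (bp (PhiF (sk k))).
Definition EG k := ser (bp (PhiG (sk k))).

Lemma EF_spec k : (1 <= k)%nat -> infinite_sum (bp (PhiF (sk k))) (EF k) /\ Rabs (EF k) <= 10 / INR (NN k).
Proof.
  intros Hk. pose proof (NN_ge_R k Hk).
  destruct (ser_geo (bp (PhiF (sk k))) (5 / INR (NN k))) as [l [Hl Hb]].
  - apply Rlt_le, Rdiv_lt_0_compat; lra.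
  - intros n; apply bpF_bound; auto.
  - unfold EF. rewrite (ser_eq _ l Hl). split; [exact Hl|]. unfold Rdiv in *; lra.
Qed.

Lemma EG_spec k : (1 <= k)%nat -> infinite_sum (bp (PhiG (sk k))) (EG k) /\ Rabs (EG k) <= 10 / INR (NN k).
Proof.
  intros Hk. pose proof (NN_ge_R k Hk).
  destruct (ser_geo (bp (PhiG (sk k))) (5 / INR (NN k))) as [l [Hl Hb]].
  - apply Rlt_le, Rdiv_lt_0_compat; lra.
  - intros n; apply bpG_bound; auto.
  - unfold EG. rewrite (ser_eq _ l Hl). split; [exact Hl|]. unfold Rdiv in *; lra.
Qed.

Definition Ct xi eta k j := if Nat.eqb (S j) k then 0 else Fblk xi eta k j.
Definition Ct2 xi eta k j := if Nat.eqb (S j) k then 0 else Gblk xi eta k j.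
Definition Rk xi eta k := EF k + ser (Ct xi eta k).
Definition R2k xi eta k := EG k + ser (Ct2 xi eta k).

Lemma Ct_spec xi eta k : Box xi eta -> (1 <= k)%nat ->
  infinite_sum (Ct xi eta k) (ser (Ct xi eta k)) /\ Rabs (ser (Ct xi eta k)) <= 48 / INR (NN k).
Proof.
  intros HB Hk. pose proof (NN_ge_R k Hk).
  destruct (ser_isq (Ct xi eta k) (24 / INR (NN k))) as [l [Hl Hb]].
  - apply Rlt_le, Rdiv_lt_0_compat; lra.
  - intros j. unfold Ct. destruct (Nat.eqb (S j) k) eqn:E.
    + rewrite Rabs_R0. apply Rmult_le_pos; [apply Rlt_le, Rdiv_lt_0_compat; lra| apply Rlt_le, isq_pos].
    + apply Fblk_far; auto. apply Nat.eqb_neq; auto.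
  - rewrite (ser_eq _ l Hl). split; [exact Hl|]. unfold Rdiv in *; lra.
Qed.

Lemma Ct2_spec xi eta k : Box xi eta -> (1 <= k)%nat ->
  infinite_sum (Ct2 xi eta k) (ser (Ct2 xi eta k)) /\ Rabs (ser (Ct2 xi eta k)) <= 144 / INR (NN k).
Proof.
  intros HB Hk. pose proof (NN_ge_R k Hk).
  destruct (ser_isq (Ct2 xi eta k) (72 / INR (NN k))) as [l [Hl Hb]].
  - apply Rlt_le, Rdiv_lt_0_compat; lra.
  - intros j. unfold Ct2. destruct (Nat.eqb (S j) k) eqn:E.
    + rewrite Rabs_R0. apply Rmult_le_pos; [apply Rlt_le, Rdiv_lt_0_compat; lra| apply Rlt_le, isq_pos].
    + apply Gblk_far; auto. apply Nat.eqb_neq; auto.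
  - rewrite (ser_eq _ l Hl). split; [exact Hl|]. unfold Rdiv in *; lra.
Qed.

Lemma Rk_bound xi eta k : Box xi eta -> (1 <= k)%nat -> Rabs (Rk xi eta k) <= 58 / INR (NN k).
Proof.
  intros HB Hk. destruct (EF_spec k Hk) as [_ H1]. destruct (Ct_spec xi eta k HB Hk) as [_ H2].
  unfold Rk. eapply Rle_trans; [apply Rabs_triang|]. unfold Rdiv in *; lra.
Qed.

Lemma R2k_bound xi eta k : Box xi eta -> (1 <= k)%nat -> Rabs (R2k xi eta k) <= 154 / INR (NN k).
Proof.
  intros HB Hk. destruct (EG_spec k Hk) as [_ H1]. destruct (Ct2_spec xi eta k HB Hk) as [_ H2].
  unfold R2k. eapply Rle_trans; [apply Rabs_triang|]. unfold Rdiv in *; lra.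
Qed.

Lemma Close_nonneg xi eta xi' eta' del : Close xi eta xi' eta' del -> 0 <= del.
Proof.
  intros HC. destruct (HC 1%nat ltac:(lia)) as [H _]. simpl in H.
  replace (del / (1 * 1)) with del in H by field. pose proof (Rabs_pos (xi 1%nat - xi' 1%nat)). lra.
Qed.

Lemma Rk_lip xi eta xi' eta' del k : Box xi eta -> Box xi' eta' -> Close xi eta xi' eta' del -> (1 <= k)%nat ->
  Rabs (Rk xi eta k - Rk xi' eta' k) <= 16 * del / INR (NN k).
Proof.
  intros HB HB' HC Hk. pose proof (NN_ge_R k Hk). pose proof (Close_nonneg _ _ _ _ _ HC).
  destruct (Ct_spec xi eta k HB Hk) as [H1 _]. destruct (Ct_spec xi' eta' k HB' Hk) as [H2 _].
  pose proof (ser_minus _ _ _ _ H1 H2) as H3.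
  destruct (ser_isq (fun j => Ct xi eta k j - Ct xi' eta' k j) (8 * del / INR (NN k))) as [l [Hl Hb]].
  - apply Rmult_le_pos; [lra| left; apply Rinv_0_lt_compat; lra].
  - intros j. unfold Ct. destruct (Nat.eqb (S j) k) eqn:E.
    + rewrite Rminus_diag, Rabs_R0. apply Rmult_le_pos; [apply Rmult_le_pos; [lra| left; apply Rinv_0_lt_compat; lra]| apply Rlt_le, isq_pos].
    + apply Fblk_diff; auto. apply Nat.eqb_neq; auto.
  - unfold Rk.
    replace (EF k + ser (Ct xi eta k) - (EF k + ser (Ct xi' eta' k))) with l by (rewrite <- (uniqueness_sum _ _ _ H3 Hl); ring).
    unfold Rdiv in *; lra.
Qed.

Lemma R2k_lip xi eta xi' eta' del k : Box xi eta -> Box xi' eta' -> Close xi eta xi' eta' del -> (1 <= k)%nat ->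
  Rabs (R2k xi eta k - R2k xi' eta' k) <= 96 * del / INR (NN k).
Proof.
  intros HB HB' HC Hk. pose proof (NN_ge_R k Hk). pose proof (Close_nonneg _ _ _ _ _ HC).
  destruct (Ct2_spec xi eta k HB Hk) as [H1 _]. destruct (Ct2_spec xi' eta' k HB' Hk) as [H2 _].
  pose proof (ser_minus _ _ _ _ H1 H2) as H3.
  destruct (ser_isq (fun j => Ct2 xi eta k j - Ct2 xi' eta' k j) (48 * del / INR (NN k))) as [l [Hl Hb]].
  - apply Rmult_le_pos; [lra| left; apply Rinv_0_lt_compat; lra].
  - intros j. unfold Ct2. destruct (Nat.eqb (S j) k) eqn:E.
    + rewrite Rminus_diag, Rabs_R0. apply Rmult_le_pos; [apply Rmult_le_pos; [lra| left; apply Rinv_0_lt_compat; lra]| apply Rlt_le, isq_pos].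
    + apply Gblk_diff; auto. apply Nat.eqb_neq; auto.
  - unfold R2k.
    replace (EG k + ser (Ct2 xi eta k) - (EG k + ser (Ct2 xi' eta' k))) with l by (rewrite <- (uniqueness_sum _ _ _ H3 Hl); ring).
    unfold Rdiv in *; lra.
Qed.

Lemma NN_k4_nat k : (1 <= k)%nat -> (4096 * k ^ 4 <= NN k)%nat.
Proof.
  intros Hk. induction k as [|k IH]; [lia|].
  destruct (Nat.eq_dec k 0) as [->|Hne]; [unfold NN; simpl; lia|].
  specialize (IH ltac:(lia)). rewrite NN_S.
  assert (S k ^ 4 <= 16 * k ^ 4)%nat.
  { replace (16 * k ^ 4)%nat with ((2 * k) ^ 4)%nat by (rewrite Nat.pow_mul_l; reflexivity).
    apply Nat.pow_le_mono_l. lia. }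
  lia.
Qed.

Lemma NN_k4 k : (1 <= k)%nat -> 4096 * (INR k ^ 2 * INR k ^ 2) <= INR (NN k).
Proof.
  intros Hk. pose proof (le_INR _ _ (NN_k4_nat k Hk)). rewrite mult_INR, pow_INR in H.
  replace (INR 4096) with 4096 in H by (simpl; ring). 
  replace (INR k ^ 2 * INR k ^ 2) with (INR k ^ 4) by ring. exact H.
Qed.

Lemma small k : (1 <= k)%nat ->
  0 < / INR (NN k) /\ INR k ^ 2 * / INR (NN k) <= / 4096 /\ INR k ^ 2 * INR k ^ 2 * / INR (NN k) <= / 4096.
Proof.
  intros Hk. pose proof (NN_k4 k Hk). pose proof (NN_ge_R k Hk).
  pose proof (INR_k_pos k Hk). set (K := INR k ^ 2) in *. set (X := INR (NN k)) in *.
  assert (HK : 1 <= K) by (unfold K; nra).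
  assert (HiX : 0 < / X) by (apply Rinv_0_lt_compat; lra).
  assert (H2 : K * K * / X <= / 4096).
  { apply Rle_trans with ((X / 4096) * / X).
    - apply Rmult_le_compat_r; lra.
    - right. field. lra. }
  split; [exact HiX|]. split; [|exact H2].
  apply Rle_trans with (K * K * / X); [|exact H2]. assert (0 <= (K - 1) * K * / X) by (apply Rmult_le_pos; [apply Rmult_le_pos|]; lra). nra.
Qed.

Lemma T_est (K iX c1 c2 a b u v : R) : 1 <= K -> 0 < iX -> K * iX <= / 4096 -> K * K * iX <= / 4096 ->
  0 <= c1 -> 0 <= c2 -> Rabs u <= c1 * iX -> Rabs v <= c2 * iX ->
  Rabs (a * u + b * K * v) * K <= (Rabs a * c1 + Rabs b * c2) / 4096.
Proof.
  intros HK HiX H1 H2 Hc1 Hc2 Hu Hv.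
  assert (E : Rabs (a * u + b * K * v) <= Rabs a * Rabs u + Rabs b * K * Rabs v).
  { eapply Rle_trans; [apply Rabs_triang|]. rewrite !Rabs_mult. rewrite (Rabs_right K) by lra. lra. }
  pose proof (Rabs_pos a). pose proof (Rabs_pos b).
  apply Rle_trans with ((Rabs a * Rabs u + Rabs b * K * Rabs v) * K).
  { apply Rmult_le_compat_r; lra. }
  assert (A1 : Rabs a * Rabs u * K <= Rabs a * c1 * (K * iX)).
  { replace (Rabs a * c1 * (K * iX)) with (Rabs a * (c1 * iX) * K) by ring.
    apply Rmult_le_compat_r; [lra|]. apply Rmult_le_compat_l; lra. }
  assert (A2 : Rabs b * K * Rabs v * K <= Rabs b * c2 * (K * K * iX)).
  { replace (Rabs b * c2 * (K * K * iX)) with (Rabs b * (c2 * iX) * (K * K)) by ring.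
    replace (Rabs b * K * Rabs v * K) with (Rabs b * Rabs v * (K * K)) by ring.
    apply Rmult_le_compat_r; [nra|]. apply Rmult_le_compat_l; lra. }
  assert (A3 : Rabs a * c1 * (K * iX) <= Rabs a * c1 * / 4096) by (apply Rmult_le_compat_l; nra).
  assert (A4 : Rabs b * c2 * (K * K * iX) <= Rabs b * c2 * / 4096) by (apply Rmult_le_compat_l; nra).
  unfold Rdiv. lra.
Qed.

Lemma le_inv_mul K a c : 0 < K -> a * K <= c -> a <= c / K.
Proof. intros HK H. apply (Rmult_le_reg_r K); [exact HK|]. replace (c / K * K) with c by (field; lra). exact H. Qed.

Definition Txi xi eta k := (2 * Rk xi eta k - (INR k) ^ 2 * R2k xi eta k) / 8.
Definition Teta xi eta k := - (3 / 2) * Rk xi eta k + (3 / 8) * (INR k) ^ 2 * R2k xi eta k.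

Lemma Txi_eq xi eta k : Txi xi eta k = (1/4) * Rk xi eta k + (-(1/8)) * (INR k)^2 * R2k xi eta k.
Proof. unfold Txi. field. Qed.

Lemma T_box xi eta : Box xi eta -> Box (Txi xi eta) (Teta xi eta).
Proof.
  intros HB k Hk. destruct (small k Hk) as [S0 [S1 S2]].
  pose proof (INR_k_pos k Hk). assert (HK : 1 <= INR k ^ 2) by nra.
  pose proof (Rk_bound xi eta k HB Hk) as B1. pose proof (R2k_bound xi eta k HB Hk) as B2.
  unfold Rdiv in B1, B2.
  replace (/ (2 * INR k ^ 2)) with ((1/2) / INR k ^ 2) by (field; lra).
  split.
  - rewrite Txi_eq. apply le_inv_mul; [lra|].
    eapply Rle_trans; [apply (T_est (INR k ^ 2) (/ INR (NN k)) 58 154); eauto; lra|].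
    replace (Rabs (1/4)) with (1/4) by (rewrite Rabs_right; lra). replace (Rabs (-(1/8))) with (1/8) by (rewrite Rabs_left; lra). lra.
  - unfold Teta. apply le_inv_mul; [lra|].
    eapply Rle_trans; [apply (T_est (INR k ^ 2) (/ INR (NN k)) 58 154); eauto; lra|].
    replace (Rabs (-(3/2))) with (3/2) by (rewrite Rabs_left; lra). replace (Rabs (3/8)) with (3/8) by (rewrite Rabs_right; lra). lra.
Qed.

Lemma T_lip xi eta xi' eta' del : Box xi eta -> Box xi' eta' -> Close xi eta xi' eta' del ->
  Close (Txi xi eta) (Teta xi eta) (Txi xi' eta') (Teta xi' eta') (del / 2).
Proof.
  intros HB HB' HC k Hk. destruct (small k Hk) as [S0 [S1 S2]].
  pose proof (Close_nonneg _ _ _ _ _ HC).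
  pose proof (INR_k_pos k Hk). assert (HK : 1 <= INR k ^ 2) by nra.
  pose proof (Rk_lip _ _ _ _ _ k HB HB' HC Hk) as B1. pose proof (R2k_lip _ _ _ _ _ k HB HB' HC Hk) as B2.
  unfold Rdiv in B1, B2.
  split.
  - rewrite !Txi_eq. apply le_inv_mul; [lra|].
    replace (1 / 4 * Rk xi eta k + - (1 / 8) * INR k ^ 2 * R2k xi eta k -
      (1 / 4 * Rk xi' eta' k + - (1 / 8) * INR k ^ 2 * R2k xi' eta' k))
      with (1/4 * (Rk xi eta k - Rk xi' eta' k) + - (1/8) * INR k ^ 2 * (R2k xi eta k - R2k xi' eta' k)) by ring.
    eapply Rle_trans; [apply (T_est (INR k ^ 2) (/ INR (NN k)) (16 * del) (96 * del)); eauto; lra|].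
    replace (Rabs (1/4)) with (1/4) by (rewrite Rabs_right; lra). replace (Rabs (-(1/8))) with (1/8) by (rewrite Rabs_left; lra). lra.
  - unfold Teta. apply le_inv_mul; [lra|].
    replace (- (3 / 2) * Rk xi eta k + 3 / 8 * INR k ^ 2 * R2k xi eta k -
      (- (3 / 2) * Rk xi' eta' k + 3 / 8 * INR k ^ 2 * R2k xi' eta' k))
      with (- (3 / 2) * (Rk xi eta k - Rk xi' eta' k) + 3 / 8 * INR k ^ 2 * (R2k xi eta k - R2k xi' eta' k)) by ring.
    eapply Rle_trans; [apply (T_est (INR k ^ 2) (/ INR (NN k)) (16 * del) (96 * del)); eauto; lra|].
    replace (Rabs (-(3/2))) with (3/2) by (rewrite Rabs_left; lra). replace (Rabs (3/8)) with (3/8) by (rewrite Rabs_right; lra). lra.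
Qed.

Fixpoint it (m : nat) : (nat -> R) * (nat -> R) :=
  match m with
  | O => (fun _ => 0, fun _ => 0)
  | S m' => (Txi (fst (it m')) (snd (it m')), Teta (fst (it m')) (snd (it m')))
  end.

Lemma it_box m : Box (fst (it m)) (snd (it m)).
Proof.
  induction m as [|m IH].
  - intros k Hk. cbn [it fst snd]. rewrite Rabs_R0. pose proof (INR_k_pos k Hk).
    assert (0 < / (2 * INR k ^ 2)) by (apply Rinv_0_lt_compat; nra). lra.
  - cbn [it fst snd]. apply T_box. exact IH.
Qed.

Lemma Close_trans a b c d e f d1 d2 : Close a b c d d1 -> Close c d e f d2 -> Close a b e f (d1 + d2).
Proof.
  intros H1 H2 k Hk. destruct (H1 k Hk) as [A1 A2]. destruct (H2 k Hk) as [B1 B2].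
  replace ((d1 + d2) / INR k ^ 2) with (d1 / INR k ^ 2 + d2 / INR k ^ 2) by (unfold Rdiv; ring).
  split.
  - replace (a k - e k) with ((a k - c k) + (c k - e k)) by ring. eapply Rle_trans; [apply Rabs_triang|lra].
  - replace (b k - f k) with ((b k - d k) + (d k - f k)) by ring. eapply Rle_trans; [apply Rabs_triang|lra].
Qed.

Lemma Close_refl a b : Close a b a b 0.
Proof. intros k Hk. rewrite !Rminus_diag, Rabs_R0. unfold Rdiv; rewrite Rmult_0_l. lra. Qed.

Lemma Close_sym a b c d del : Close a b c d del -> Close c d a b del.
Proof. intros H k Hk. destruct (H k Hk). rewrite (Rabs_minus_sym (c k)), (Rabs_minus_sym (d k)). auto. Qed.

Lemma Close_mono a b c d d1 d2 : d1 <= d2 -> Close a b c d d1 -> Close a b c d d2.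
Proof.
  intros Hd H k Hk. destruct (H k Hk). pose proof (INR_k_pos k Hk).
  assert (d1 / INR k ^ 2 <= d2 / INR k ^ 2).
  { unfold Rdiv. apply Rmult_le_compat_r; [left; apply Rinv_0_lt_compat; nra|lra]. }
  split; lra.
Qed.

Lemma Box_close a b c d : Box a b -> Box c d -> Close a b c d 1.
Proof.
  intros H1 H2 k Hk. destruct (H1 k Hk). destruct (H2 k Hk). pose proof (INR_k_pos k Hk).
  assert (E : / (2 * INR k ^ 2) + / (2 * INR k ^ 2) = 1 / INR k ^ 2) by (field; lra).
  split.
  - replace (a k - c k) with (a k + - c k) by ring. eapply Rle_trans; [apply Rabs_triang|]. rewrite Rabs_Ropp. lra.
  - replace (b k - d k) with (b k + - d k) by ring. eapply Rle_trans; [apply Rabs_triang|]. rewrite Rabs_Ropp. lra.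
Qed.

Lemma it_step m : Close (fst (it m)) (snd (it m)) (fst (it (S m))) (snd (it (S m))) ((/ 2) ^ m).
Proof.
  induction m as [|m IH].
  - replace ((/2)^0) with 1 by reflexivity. apply Box_close; apply it_box.
  - replace ((/2) ^ S m) with ((/2) ^ m / 2) by (rewrite <- tech_pow_Rmult; field).
    exact (T_lip _ _ _ _ _ (it_box m) (it_box (S m)) IH).
Qed.

Lemma it_far m p : Close (fst (it m)) (snd (it m)) (fst (it (m + p))) (snd (it (m + p))) (2 * (/ 2) ^ m - 2 * (/ 2) ^ (m + p)).
Proof.
  induction p as [|p IH].
  - rewrite Nat.add_0_r. replace (2 * (/2)^m - 2 * (/2)^m) with 0 by ring. apply Close_refl.
  - replace (m + S p)%nat with (S (m + p)) by lia.
    replace (2 * (/ 2) ^ m - 2 * (/ 2) ^ S (m + p)) with ((2 * (/ 2) ^ m - 2 * (/ 2) ^ (m + p)) + (/2) ^ (m + p)) by (simpl; field).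
    eapply Close_trans; [exact IH| apply it_step].
Qed.

Lemma geo_small c eps : 0 < eps -> exists N, forall n, (n >= N)%nat -> c * (/ 2) ^ n < eps.
Proof.
  intros He. destruct (pow_lt_1_zero (/2) ltac:(rewrite Rabs_right; lra) (eps / (Rabs c + 1))) as [N HN].
  { apply Rdiv_lt_0_compat; [lra|]. pose proof (Rabs_pos c); lra. }
  exists N. intros n Hn. specialize (HN n Hn). rewrite Rabs_right in HN by (apply Rle_ge, pow_le; lra).
  pose proof (Rabs_pos c). pose proof (pow_lt (/2) n ltac:(lra)).
  apply Rle_lt_trans with ((Rabs c + 1) * (/2)^n).
  - pose proof (Rle_abs c). nra.
  - apply Rlt_le_trans with ((Rabs c + 1) * (eps / (Rabs c + 1))).
    + apply Rmult_lt_compat_l; lra.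
    + right; field; lra.
Qed.

Lemma le_geo r a c : (forall m, r <= a + c * (/ 2) ^ m) -> r <= a.
Proof.
  intros H. destruct (Rle_dec r a) as [|Hn]; [auto|].
  destruct (geo_small c (r - a) ltac:(lra)) as [N HN]. specialize (HN N (le_n N)). specialize (H N). lra.
Qed.

Definition lim (U : nat -> R) : R :=
  match excluded_middle_informative (exists l, Un_cv U l) with
  | left H => proj1_sig (constructive_indefinite_description _ H)
  | right _ => 0
  end.

Lemma lim_spec U : Cauchy_crit U -> Un_cv U (lim U).
Proof.
  intros HC. unfold lim. destruct (excluded_middle_informative _) as [H|H].
  - exact (proj2_sig (constructive_indefinite_description _ H)).
  - exfalso. apply H. destruct (R_complete U HC) as [l Hl]. exists l; exact Hl.
Qed.

Lemma coord_cauchy (sel : (nat -> R) * (nat -> R) -> nat -> R) k :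
  (1 <= k)%nat ->
  (forall m p, Rabs (sel (it m) k - sel (it (m + p)%nat) k) <= (2 * (/ 2) ^ m) / INR k ^ 2) ->
  Cauchy_crit (fun m => sel (it m) k).
Proof.
  intros Hk H eps He. pose proof (INR_k_pos k Hk).
  destruct (geo_small (2 / INR k ^ 2) eps He) as [N HN]. exists N.
  intros n m Hn Hm. unfold Rdist.
  destruct (Compare_dec.le_lt_dec n m) as [Hnm|Hnm].
  - replace m with (n + (m - n))%nat by lia. eapply Rle_lt_trans; [apply H|].
    specialize (HN n Hn). unfold Rdiv in *. lra.
  - rewrite Rabs_minus_sym. replace n with (m + (n - m))%nat by lia. eapply Rle_lt_trans; [apply H|].
    specialize (HN m Hm). unfold Rdiv in *. lra.
Qed.

Definition xs k := lim (fun m => fst (it m) k).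
Definition ys k := lim (fun m => snd (it m) k).

Lemma cv_bound U l m c : Un_cv U l -> (forall p, Rabs (U m - U (m + p)%nat) <= c) -> Rabs (U m - l) <= c.
Proof.
  intros Hl H. destruct (Rle_dec (Rabs (U m - l)) c) as [|Hn]; [auto|]. exfalso.
  destruct (Hl (Rabs (U m - l) - c)) as [N HN]; [lra|].
  specialize (HN (m + N)%nat ltac:(lia)). specialize (H N). unfold Rdist in HN.
  pose proof (Rabs_triang (U m - U (m + N)%nat) (U (m + N)%nat - l)) as T.
  replace (U m - U (m + N)%nat + (U (m + N)%nat - l)) with (U m - l) in T by ring. lra.
Qed.

Lemma it_coord m p k : (1 <= k)%nat ->
  Rabs (fst (it m) k - fst (it (m + p)%nat) k) <= 2 * (/2)^m / INR k ^ 2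
  /\ Rabs (snd (it m) k - snd (it (m + p)%nat) k) <= 2 * (/2)^m / INR k ^ 2.
Proof.
  intros Hk. pose proof (INR_k_pos k Hk). destruct (it_far m p k Hk) as [A1 A2].
  assert ((2 * (/ 2) ^ m - 2 * (/ 2) ^ (m + p)) / INR k ^ 2 <= 2 * (/2)^m / INR k ^ 2).
  { unfold Rdiv. apply Rmult_le_compat_r; [left; apply Rinv_0_lt_compat; nra|].
    pose proof (pow_lt (/2) (m + p) ltac:(lra)). lra. }
  split; lra.
Qed.

Lemma xs_cv k : (1 <= k)%nat -> Un_cv (fun m => fst (it m) k) (xs k).
Proof.
  intros Hk. apply lim_spec. apply (coord_cauchy (fun x => fst x)); auto.
  intros m p. apply (it_coord m p k Hk).
Qed.

Lemma ys_cv k : (1 <= k)%nat -> Un_cv (fun m => snd (it m) k) (ys k).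
Proof.
  intros Hk. apply lim_spec. apply (coord_cauchy (fun x => snd x)); auto.
  intros m p. apply (it_coord m p k Hk).
Qed.

Lemma it_lim_close m : Close (fst (it m)) (snd (it m)) xs ys (2 * (/ 2) ^ m).
Proof.
  intros k Hk. split.
  - apply (cv_bound (fun m => fst (it m) k)); [apply xs_cv; auto|intros p; apply (it_coord m p k Hk)].
  - apply (cv_bound (fun m => snd (it m) k)); [apply ys_cv; auto|intros p; apply (it_coord m p k Hk)].
Qed.

Lemma lim_box : Box xs ys.
Proof.
  intros k Hk. pose proof (INR_k_pos k Hk).
  assert (HK : 0 < / INR k ^ 2) by (apply Rinv_0_lt_compat; nra).
  split.
  - apply (le_geo _ _ (2 / INR k ^ 2)). intros m.
    destruct (it_lim_close m k Hk) as [A _]. destruct (it_box m k Hk) as [B _].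
    rewrite Rabs_minus_sym in A.
    replace (xs k) with ((xs k - fst (it m) k) + fst (it m) k) by ring.
    eapply Rle_trans; [apply Rabs_triang|]. unfold Rdiv in *. lra.
  - apply (le_geo _ _ (2 / INR k ^ 2)). intros m.
    destruct (it_lim_close m k Hk) as [_ A]. destruct (it_box m k Hk) as [_ B].
    rewrite Rabs_minus_sym in A.
    replace (ys k) with ((ys k - snd (it m) k) + snd (it m) k) by ring.
    eapply Rle_trans; [apply Rabs_triang|]. unfold Rdiv in *. lra.
Qed.

Lemma fixed_pt k : (1 <= k)%nat -> Txi xs ys k = xs k /\ Teta xs ys k = ys k.
Proof.
  intros Hk. pose proof (INR_k_pos k Hk).
  assert (HC : forall m, Close (Txi xs ys) (Teta xs ys) xs ys (2 * (/2)^m)).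
  { intros m. pose proof (T_lip _ _ _ _ _ lim_box (it_box m) (Close_sym _ _ _ _ _ (it_lim_close m))) as H1.
    change (Txi (fst (it m)) (snd (it m))) with (fst (it (S m))) in H1.
    change (Teta (fst (it m)) (snd (it m))) with (snd (it (S m))) in H1.
    pose proof (Close_trans _ _ _ _ _ _ _ _ H1 (it_lim_close (S m))) as H2.
    eapply Close_mono; [|exact H2]. simpl. lra. }
  assert (HK : 0 < / INR k ^ 2) by (apply Rinv_0_lt_compat; nra).
  split.
  - assert (Rabs (Txi xs ys k - xs k) <= 0).
    { apply (le_geo _ _ (2 / INR k ^ 2)). intros m. destruct (HC m k Hk) as [A _]. unfold Rdiv in *. lra. }
    apply abs_le_b in H0. lra.
  - assert (Rabs (Teta xs ys k - ys k) <= 0).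
    { apply (le_geo _ _ (2 / INR k ^ 2)). intros m. destruct (HC m k Hk) as [_ A]. unfold Rdiv in *. lra. }
    apply abs_le_b in H0. lra.
Qed.

Lemma spc_blk Phi xi eta j d : (d <= 3)%nat ->
  spc Phi xi eta (Nb j + d) = Phi (Z.of_nat (Nb j + d)) (val xi eta (S j) d).
Proof. intros Hd. unfold spc. rewrite dec_blk by exact Hd. reflexivity. Qed.

Lemma spc_sum Phi xi eta c L : 0 <= c ->
  (forall j d, (d <= 3)%nat -> Rabs (Phi (Z.of_nat (Nb j + d)) (val xi eta (S j) d)) <= c * isq j) ->
  infinite_sum (fun j => blk4 (fun d => Phi (Z.of_nat (Nb j + d)) (val xi eta (S j) d))) L ->
  infinite_sum (spc Phi xi eta) L.
Proof.
  intros Hc Hb HL.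
  assert (E : forall j d, (d <= 3)%nat -> spc Phi xi eta (Nb j + d) = Phi (Z.of_nat (Nb j + d)) (val xi eta (S j) d))
    by (intros; apply spc_blk; auto).
  assert (E0 : forall j, spc Phi xi eta (Nb j) = Phi (Z.of_nat (Nb j + 0)) (val xi eta (S j) 0)).
  { intros j. rewrite <- (E j 0%nat) by lia. rewrite Nat.add_0_r. reflexivity. }
  destruct (ser_isq (fun j => Rabs (spc Phi xi eta (Nb j)) + Rabs (spc Phi xi eta (Nb j + 1)%nat)
     + Rabs (spc Phi xi eta (Nb j + 2)%nat) + Rabs (spc Phi xi eta (Nb j + 3)%nat)) (4 * c)) as [LA [HLA _]].
  { lra. }
  { intros j. rewrite E0, !E by lia.
    pose proof (Hb j 0%nat ltac:(lia)). pose proof (Hb j 1%nat ltac:(lia)).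
    pose proof (Hb j 2%nat ltac:(lia)). pose proof (Hb j 3%nat ltac:(lia)).
    repeat rewrite Rabs_right by (repeat apply Rle_ge, Rplus_le_le_0_compat; apply Rabs_pos).
    rewrite Rabs_right by (apply Rle_ge; repeat apply Rplus_le_le_0_compat; apply Rabs_pos). lra. }
  apply (sparse_sum (spc Phi xi eta) Nb Nb0_ge Nb_gap) with (LA := LA).
  - intros n Hn. unfold spc. destruct (dec n) as [[k d]|] eqn:Ed; [|reflexivity].
    destruct (dec_some n k d Ed) as [Hk [Hd En]]. exfalso. exact (Hn (k - 1)%nat d Hd En).
  - exact HLA.
  - apply (ser_ext (fun j => blk4 (fun d => Phi (Z.of_nat (Nb j + d)) (val xi eta (S j) d)))); [|exact HL].
    intros j. unfold blk4. rewrite E0, !E by lia. reflexivity.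
Qed.

Lemma Zsum_split Phi xi eta LS LB :
  infinite_sum (spc Phi xi eta) LS -> infinite_sum (bp Phi) LB ->
  Zseries (fun z => Phi z (aseq xi eta z)) (LS + LB).
Proof.
  intros H1 H2. unfold Zseries. apply (ser_ext (fun n => spc Phi xi eta n + bp Phi n)).
  - intros n. symmetry. apply pair_split.
  - apply ser_plus; auto.
Qed.

Lemma blkF_eq xi eta k j : blk4 (fun d => PhiF (sk k) (Z.of_nat (Nb j + d)) (val xi eta (S j) d)) = Fblk xi eta k j.
Proof. unfold Fblk, blk4, PhiF, pos. rewrite <- !INR_IZR_INZ. reflexivity. Qed.

Lemma blkG_eq xi eta k j : blk4 (fun d => PhiG (sk k) (Z.of_nat (Nb j + d)) (val xi eta (S j) d)) = Gblk xi eta k j.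
Proof. unfold Gblk, blk4, PhiG, pos. rewrite <- !INR_IZR_INZ. reflexivity. Qed.



Lemma blk_total (C : nat -> R) (Fb : nat -> R) k L :
  (1 <= k)%nat -> infinite_sum C L ->
  (forall j, C j = if Nat.eqb (S j) k then 0 else Fb j) ->
  infinite_sum Fb (L + Fb (k - 1)%nat).
Proof.
  intros Hk HC E. pose proof (ser_point C L (k - 1)%nat (Fb (k - 1)%nat) HC) as H.
  eapply ser_ext; [|exact H]. intros n. cbv beta. rewrite E.
  destruct (Nat.eqb n (k - 1)) eqn:E1.
  - apply Nat.eqb_eq in E1. subst n. replace (Nat.eqb (S (k - 1)) k) with true by (symmetry; apply Nat.eqb_eq; lia). ring.
  - apply Nat.eqb_neq in E1. replace (Nat.eqb (S n) k) with false by (symmetry; apply Nat.eqb_neq; lia). reflexivity.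
Qed.

Lemma Fblk_local xi eta k : (1 <= k)%nat -> Fblk xi eta k (k - 1) = 4 * xi k + 4 / 3 * eta k.
Proof.
  intros Hk. pose proof (INR_k_pos k Hk). unfold Fblk, blk4. rewrite !local_dist by exact Hk.
  replace (S (k - 1)) with k by lia. unfold val, m1, m2. simpl INR. field. lra.
Qed.

Lemma Gblk_local xi eta k : (1 <= k)%nat -> Gblk xi eta k (k - 1) = (16 * xi k + 8 / 3 * eta k) / INR k ^ 2.
Proof.
  intros Hk. pose proof (INR_k_pos k Hk). unfold Gblk, blk4. rewrite !local_dist by exact Hk.
  replace (S (k - 1)) with k by lia. unfold val, m1, m2. simpl INR. field. lra.
Qed.

Lemma sumF k : (1 <= k)%nat -> Zseries (fun z => aseq xs ys z / (sk k - IZR z)) 0.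
Proof.
  intros Hk. pose proof lim_box as HB.
  destruct (Ct_spec xs ys k HB Hk) as [HC _].
  pose proof (blk_total (Ct xs ys k) (Fblk xs ys k) k _ Hk HC ltac:(intros; reflexivity)) as HT.
  assert (HS : infinite_sum (spc (PhiF (sk k)) xs ys) (ser (Ct xs ys k) + Fblk xs ys k (k - 1))).
  { apply (spc_sum _ _ _ 6); [lra| |].
    - intros j d Hd. unfold PhiF. rewrite <- INR_IZR_INZ.
      replace (6 * isq j) with ((3 * isq j) / (/2)) by field.
      apply div_le; [apply val_abs; auto| lra| apply (near k j d)].
    - eapply ser_ext; [|exact HT]. intros j. symmetry. apply blkF_eq. }
  destruct (EF_spec k Hk) as [HE _].
  pose proof (Zsum_split (PhiF (sk k)) xs ys _ _ HS HE) as HZ.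
  replace 0 with (ser (Ct xs ys k) + Fblk xs ys k (k - 1) + EF k).
  - exact HZ.
  - rewrite Fblk_local by exact Hk. destruct (fixed_pt k Hk) as [Hx Hy].
    rewrite <- Hx, <- Hy. unfold Txi, Teta, Rk. field.
Qed.

Lemma sumG k : (1 <= k)%nat -> Zseries (fun z => (aseq xs ys z) ^ 2 / (sk k - IZR z)) 0.
Proof.
  intros Hk. pose proof lim_box as HB. pose proof (INR_k_pos k Hk).
  destruct (Ct2_spec xs ys k HB Hk) as [HC _].
  pose proof (blk_total (Ct2 xs ys k) (Gblk xs ys k) k _ Hk HC ltac:(intros; reflexivity)) as HT.
  assert (HS : infinite_sum (spc (PhiG (sk k)) xs ys) (ser (Ct2 xs ys k) + Gblk xs ys k (k - 1))).
  { apply (spc_sum _ _ _ 18); [lra| |].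
    - intros j d Hd. unfold PhiG. rewrite <- INR_IZR_INZ.
      replace (18 * isq j) with ((9 * isq j) / (/2)) by field.
      apply div_le; [apply val_sq_abs; auto| lra| apply (near k j d)].
    - eapply ser_ext; [|exact HT]. intros j. symmetry. apply blkG_eq. }
  destruct (EG_spec k Hk) as [HE _].
  pose proof (Zsum_split (PhiG (sk k)) xs ys _ _ HS HE) as HZ.
  replace 0 with (ser (Ct2 xs ys k) + Gblk xs ys k (k - 1) + EG k).
  - exact HZ.
  - rewrite Gblk_local by exact Hk. destruct (fixed_pt k Hk) as [Hx Hy].
    rewrite <- Hx, <- Hy. unfold Txi, Teta, R2k. field. lra.
Qed.

Lemma sumA : exists l, Zseries (fun z => Rabs (aseq xs ys z)) l.
Proof.
  pose proof lim_box as HB.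
  destruct (ser_isq (fun j => blk4 (fun d => PhiA (Z.of_nat (Nb j + d)) (val xs ys (S j) d))) 12) as [L [HL _]].
  { lra. }
  { intros j. replace (12 * isq j) with (4 * (3 * isq j)) by ring. apply blk4_bound.
    intros d Hd. unfold PhiA. rewrite Rabs_Rabsolu. apply val_abs; auto. }
  assert (HS : infinite_sum (spc PhiA xs ys) L).
  { apply (spc_sum _ _ _ 3); [lra| |exact HL].
    intros j d Hd. unfold PhiA. rewrite Rabs_Rabsolu. apply val_abs; auto. }
  destruct (ser_geo (bp PhiA) 2) as [LB [HB2 _]]; [lra| apply bpA_bound|].
  exists (L + LB). exact (Zsum_split PhiA xs ys _ _ HS HB2).
Qed.

Lemma a_pos z : 0 < aseq xs ys z.
Proof.
  unfold aseq. assert (He : 0 < ebase z) by (unfold ebase; apply pow_lt; lra).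
  destruct (Z.ltb z 0); [exact He|].
  destruct (dec (Z.to_nat z)) as [[k d]|] eqn:E; [|exact He].
  destruct (dec_some _ _ _ E) as [Hk _]. apply (val_bounds xs ys k d lim_box Hk).
Qed.

Theorem proposition4p1 :
  exists (a : Z -> R) (nk : nat -> nat) (alpha : nat -> R),
    ell1 a /\
    (forall n : Z, 0 < a n) /\
    (forall k : nat, (1 <= k)%nat -> (nk (S k) > 2 * nk k)%nat) /\
    (forall k : nat, (1 <= k)%nat ->
       let s := INR (nk k) + / 2 in
       sin_series_value a s 0 /\
       sin_series_value (fun n => (a n) ^ 2) s 0 /\
       1 < alpha k < 3 /\
       a (Z.of_nat (nk k)) = alpha k / (INR k) ^ 2).
Proof.
  exists (aseq xs ys), NN, (fun k => 2 + INR k ^ 2 * xs k).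
  split; [exact sumA|]. split; [exact a_pos|]. split.
  { intros k _. rewrite NN_S. pose proof (NN_ge1 k). lia. }
  intros k Hk s. split; [|split; [|split]].
  - exists 0. split; [exact (sumF k Hk)| ring].
  - exists 0. split; [exact (sumG k Hk)| ring].
  - destruct (lim_box k Hk) as [H1 _]. pose proof (INR_k_pos k Hk).
    assert (HK : 0 < INR k ^ 2) by nra.
    apply abs_le_b in H1.
    assert (E : INR k ^ 2 * / (2 * INR k ^ 2) = 1/2) by (field; lra).
    assert (INR k ^ 2 * xs k <= 1/2) by (rewrite <- E; apply Rmult_le_compat_l; lra).
    assert (- (1/2) <= INR k ^ 2 * xs k) by (rewrite <- E; replace (- (INR k ^ 2 * / (2 * INR k ^ 2))) with (INR k ^ 2 * - / (2 * INR k ^ 2)) by ring; apply Rmult_le_compat_l; lra).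
    split; lra.
  - pose proof (INR_k_pos k Hk). unfold aseq.
    assert (Z.ltb (Z.of_nat (NN k)) 0 = false) as -> by (apply Z.ltb_ge; lia).
    rewrite Nat2Z.id.
    assert (EN : NN k = (Nb (k - 1) + 1)%nat).
    { unfold Nb. replace (S (k - 1)) with k by lia. pose proof (NN_ge1 k). lia. }
    rewrite EN, dec_blk by lia. replace (S (k - 1)) with k by lia.
    unfold val, m1. field. lra.
Qed.
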